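(* Let $T\in B(H)$ satisfy $(T-t_N)^{k_N}(T-t_{N-1})^{k_{N-1}}\cdots(T-t_1)^{k_1}=0$, where $t_1,\ldots,t_N\in\mathbb C$ are pairwise distinct with $|t_1|\ge|t_2|\ge\cdots\ge|t_N|$ and $k_1,\ldots,k_N$ are positive integers. Define $R_m=\ker\big((T-t_m)^{k_m}\cdots(T-t_1)^{k_1}\big)$ for $0\le m\le N$ ($R_0=\{0\}$), $L_m=R_m\ominus R_{m-1}$ for $1\le m\le N$, and $M_m=H\ominus(L_1\oplus\cdots\oplus L_m)$. Then there exists $0\le m\le N$ such that, with respect to $H=L_1\oplus\cdots\oplus L_m\oplus M_m$, $$T=t_1 1_{L_1}\oplus\cdots\oplus t_m 1_{L_m}\oplus S,$$ where $S\in B(M_m)$ satisfies $(S-t_{m+1})^{k_{m+1}}\cdots(S-t_N)^{k_N}=0$ and $\|S\|>|t_i|$ for all $i\ge m+1$. *)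

(* Defs.v *)
From Stdlib Require Import Reals.
Open Scope R_scope.

Record Cpx := mkC { re : R; im : R }.
Definition C0 : Cpx := mkC 0 0.
Definition C1 : Cpx := mkC 1 0.
Definition Cadd (a b : Cpx) : Cpx := mkC (re a + re b) (im a + im b).
Definition Copp (a : Cpx) : Cpx := mkC (- re a) (- im a).
Definition Cmul (a b : Cpx) : Cpx :=
  mkC (re a * re b - im a * im b) (re a * im b + im a * re b).
Definition Cconj (a : Cpx) : Cpx := mkC (re a) (- im a).
Definition Cabs (a : Cpx) : R := sqrt (re a ^ 2 + im a ^ 2).

Record HilbertSpace := {
  hcar :> Type;
  hzero : hcar;
  hadd : hcar -> hcar -> hcar;
  hopp : hcar -> hcar;
  hscal : Cpx -> hcar -> hcar;
  hinner : hcar -> hcar -> Cpx;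
  hadd_assoc : forall x y z, hadd x (hadd y z) = hadd (hadd x y) z;
  hadd_comm : forall x y, hadd x y = hadd y x;
  hadd_zero : forall x, hadd x hzero = x;
  hadd_opp : forall x, hadd x (hopp x) = hzero;
  hscal_addv : forall a x y, hscal a (hadd x y) = hadd (hscal a x) (hscal a y);
  hscal_adds : forall a b x, hscal (Cadd a b) x = hadd (hscal a x) (hscal b x);
  hscal_mul : forall a b x, hscal (Cmul a b) x = hscal a (hscal b x);
  hscal_one : forall x, hscal C1 x = x;
  (* inner product axioms (linear in the first argument) *)
  hinner_add : forall x y z, hinner (hadd x y) z = Cadd (hinner x z) (hinner y z);
  hinner_scal : forall a x y, hinner (hscal a x) y = Cmul a (hinner x y);
  hinner_sym : forall x y, hinner y x = Cconj (hinner x y);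
  hinner_pos : forall x, 0 <= re (hinner x x);
  hinner_def : forall x, hinner x x = C0 -> x = hzero;
  hcomplete : forall u : nat -> hcar,
    (forall eps, eps > 0 -> exists N, forall n m, (n >= N)%nat -> (m >= N)%nat ->
        sqrt (re (hinner (hadd (u n) (hopp (u m))) (hadd (u n) (hopp (u m))))) < eps) ->
    exists l, forall eps, eps > 0 -> exists N, forall n, (n >= N)%nat ->
        sqrt (re (hinner (hadd (u n) (hopp l)) (hadd (u n) (hopp l)))) < eps
}.

Arguments hzero {h}.
Arguments hadd {h}.
Arguments hopp {h}.
Arguments hscal {h}.
Arguments hinner {h}.

Definition hsub {H : HilbertSpace} (x y : H) : H := hadd x (hopp y).
Definition hnorm {H : HilbertSpace} (x : H) : R := sqrt (re (hinner x x)).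

Definition bounded_operator {H : HilbertSpace} (T : H -> H) : Prop :=
  (forall x y, T (hadd x y) = hadd (T x) (T y)) /\
  (forall a x, T (hscal a x) = hscal a (T x)) /\
  (exists c, forall x, hnorm (T x) <= c * hnorm x).

Definition shiftop {H : HilbertSpace} (T : H -> H) (c : Cpx) (x : H) : H :=
  hsub (T x) (hscal c x).

Fixpoint iter_op {H : HilbertSpace} (n : nat) (f : H -> H) (x : H) : H :=
  match n with O => x | S n' => f (iter_op n' f x) end.

(* Pprod T t k m = (T - t_m)^{k_m} ... (T - t_1)^{k_1}   (indices 1-based) *)
Fixpoint Pprod {H : HilbertSpace} (T : H -> H) (t : nat -> Cpx) (k : nat -> nat)
  (m : nat) (x : H) : H :=
  match m with
  | O => x
  | S m' => iter_op (k m) (shiftop T (t m)) (Pprod T t k m' x)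
  end.

(* Qprod T t k j m = (T - t_{m+1})^{k_{m+1}} ... (T - t_{m+j})^{k_{m+j}} *)
Fixpoint Qprod {H : HilbertSpace} (T : H -> H) (t : nat -> Cpx) (k : nat -> nat)
  (j m : nat) (x : H) : H :=
  match j with
  | O => x
  | S j' => iter_op (k (S m)) (shiftop T (t (S m))) (Qprod T t k j' (S m) x)
  end.

Definition Rsp {H : HilbertSpace} (T : H -> H) t k (m : nat) (x : H) : Prop :=
  Pprod T t k m x = hzero.

Definition Lsp {H : HilbertSpace} (T : H -> H) t k (m : nat) (x : H) : Prop :=
  Rsp T t k m x /\ forall y, Rsp T t k (m - 1) y -> hinner x y = C0.

Definition Msp {H : HilbertSpace} (T : H -> H) t k (m : nat) (x : H) : Prop :=
  forall i, (1 <= i <= m)%nat -> forall y, Lsp T t k i y -> hinner x y = C0.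

Definition is_opnorm_on {H : HilbertSpace} (V : H -> Prop) (T : H -> H) (s : R) : Prop :=
  is_lub (fun r => exists x, V x /\ hnorm x <= 1 /\ r = hnorm (T x)) s.

(* Main.v *)
Require Import Defs.
From Stdlib Require Import Reals.
Open Scope R_scope.
From Stdlib Require Import Lra Lia Psatz ZArith Classical ClassicalEpsilon.
Import Defs.
Open Scope R_scope.

Lemma Ceq : forall a b : Cpx, re a = re b -> im a = im b -> a = b.
Proof. intros [a1 a2] [b1 b2]; simpl; intros; subst; reflexivity. Qed.

Arguments hadd_assoc {h}. Arguments hadd_comm {h}. Arguments hadd_zero {h}. Arguments hadd_opp {h}.
Arguments hscal_addv {h}. Arguments hscal_adds {h}. Arguments hscal_mul {h}. Arguments hscal_one {h}.
Arguments hinner_add {h}. Arguments hinner_scal {h}. Arguments hinner_sym {h}. Arguments hinner_pos {h}.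
Arguments hinner_def {h}.

Ltac ceq := apply Ceq; simpl; ring.

Definition Cabs2 (a : Cpx) : R := re a * re a + im a * im a.
Definition nsq {H : HilbertSpace} (x : H) : R := re (hinner x x).

Lemma add0l {H : HilbertSpace} (x : H) : hadd hzero x = x.
Proof. rewrite hadd_comm; apply hadd_zero. Qed.

Lemma add_cancel {H : HilbertSpace} (x y z : H) : hadd x y = hadd x z -> y = z.
Proof.
  intro E. assert (E2 : hadd (hopp x) (hadd x y) = hadd (hopp x) (hadd x z)) by (rewrite E; auto).
  rewrite !hadd_assoc in E2. rewrite (hadd_comm _ x), hadd_opp, !add0l in E2. exact E2.
Qed.

Lemma scal0 {H : HilbertSpace} (x : H) : hscal C0 x = hzero.
Proof.
  apply (add_cancel (hscal C0 x)). rewrite hadd_zero, <- hscal_adds.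
  f_equal. ceq.
Qed.

Lemma scal_zero {H : HilbertSpace} (a : Cpx) : hscal a (@hzero H) = hzero.
Proof.
  apply (add_cancel (hscal a hzero)). rewrite hadd_zero, <- hscal_addv, hadd_zero. reflexivity.
Qed.

Lemma opp_scal {H : HilbertSpace} (x : H) : hopp x = hscal (Copp C1) x.
Proof.
  apply (add_cancel x). rewrite hadd_opp. rewrite <- (hscal_one x) at 1.
  rewrite <- hscal_adds. rewrite <- (scal0 x). f_equal. ceq.
Qed.

Lemma opp_zero {H : HilbertSpace} : hopp (@hzero H) = hzero.
Proof. rewrite opp_scal, scal_zero. reflexivity. Qed.

Lemma sub_self {H : HilbertSpace} (x : H) : hsub x x = hzero.
Proof. apply hadd_opp. Qed.

Lemma sub_eq0 {H : HilbertSpace} (x y : H) : hsub x y = hzero -> x = y.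
Proof.
  unfold hsub; intro E. apply (add_cancel (hopp y)). rewrite (hadd_comm _ x), E, hadd_comm, hadd_opp. reflexivity.
Qed.

Lemma sub_add {H : HilbertSpace} (w p : H) : hadd p (hsub w p) = w.
Proof. unfold hsub. rewrite (hadd_comm w), hadd_assoc, hadd_opp, add0l. reflexivity. Qed.

Lemma scal_scal {H : HilbertSpace} a b (x : H) : hscal a (hscal b x) = hscal b (hscal a x).
Proof. rewrite <- !hscal_mul. f_equal. ceq. Qed.

Lemma scal_opp {H : HilbertSpace} a (x : H) : hscal a (hopp x) = hopp (hscal a x).
Proof. rewrite !opp_scal, scal_scal. reflexivity. Qed.

Lemma scal_sub {H : HilbertSpace} a (x y : H) : hscal a (hsub x y) = hsub (hscal a x) (hscal a y).
Proof. unfold hsub. rewrite hscal_addv, scal_opp. reflexivity. Qed.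

Lemma opp_add {H : HilbertSpace} (x y : H) : hopp (hadd x y) = hadd (hopp x) (hopp y).
Proof. rewrite !opp_scal, hscal_addv. reflexivity. Qed.

Lemma sub_swap {H : HilbertSpace} (p q r s : H) :
  hsub (hsub p q) (hsub r s) = hsub (hsub p r) (hsub q s).
Proof.
  unfold hsub. rewrite !opp_add. rewrite !hadd_assoc. f_equal.
  rewrite <- !hadd_assoc. f_equal. apply hadd_comm.
Qed.

Lemma inner_add_r {H : HilbertSpace} (x y z : H) :
  hinner x (hadd y z) = Cadd (hinner x y) (hinner x z).
Proof.
  rewrite (hinner_sym (hadd y z) x), hinner_add, (hinner_sym x y), (hinner_sym x z).
  destruct (hinner x y), (hinner x z); ceq.
Qed.

Lemma inner_scal_r {H : HilbertSpace} a (x y : H) :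
  hinner x (hscal a y) = Cmul (Cconj a) (hinner x y).
Proof.
  rewrite (hinner_sym (hscal a y) x), hinner_scal, (hinner_sym x y).
  destruct a, (hinner x y); ceq.
Qed.

Lemma inner_zero_l {H : HilbertSpace} (y : H) : hinner hzero y = C0.
Proof. rewrite <- (scal0 y), hinner_scal. ceq. Qed.

Lemma inner_zero_r {H : HilbertSpace} (y : H) : hinner y hzero = C0.
Proof. rewrite hinner_sym, inner_zero_l. ceq. Qed.

Lemma inner_opp_l {H : HilbertSpace} (x y : H) : hinner (hopp x) y = Copp (hinner x y).
Proof. rewrite opp_scal, hinner_scal. ceq. Qed.

Lemma inner_sub_l {H : HilbertSpace} (x y z : H) :
  hinner (hsub x y) z = Cadd (hinner x z) (Copp (hinner y z)).
Proof. unfold hsub. rewrite hinner_add, inner_opp_l. reflexivity. Qed.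

Lemma im_self {H : HilbertSpace} (x : H) : im (hinner x x) = 0.
Proof.
  pose proof (hinner_sym x x) as E. destruct (hinner x x) as [a b]. unfold Cconj in E. simpl in *.
  injection E. lra.
Qed.

Lemma nsq_ge0 {H : HilbertSpace} (x : H) : 0 <= nsq x.
Proof. apply hinner_pos. Qed.

Lemma nsq_eq0 {H : HilbertSpace} (x : H) : nsq x = 0 -> x = hzero.
Proof. unfold nsq; intro E. apply hinner_def. apply Ceq; simpl; auto. apply im_self. Qed.

Lemma nsq_zero {H : HilbertSpace} : nsq (@hzero H) = 0.
Proof. unfold nsq. rewrite inner_zero_l. reflexivity. Qed.

Lemma inner_scal2 {H : HilbertSpace} a b (x y : H) :
  hinner (hscal a x) (hscal b y) = Cmul (Cmul a (Cconj b)) (hinner x y).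
Proof. rewrite hinner_scal, inner_scal_r. destruct a, b, (hinner x y); ceq. Qed.

Lemma nsq_scal {H : HilbertSpace} a (x : H) : nsq (hscal a x) = Cabs2 a * nsq x.
Proof.
  unfold nsq, Cabs2. rewrite inner_scal2. pose proof (im_self x).
  destruct a, (hinner x x); simpl in *. subst. ring.
Qed.

Lemma nsq_add {H : HilbertSpace} (x y : H) :
  nsq (hadd x y) = nsq x + 2 * re (hinner x y) + nsq y.
Proof.
  unfold nsq. rewrite hinner_add, !inner_add_r, (hinner_sym x y).
  destruct (hinner x y), (hinner x x), (hinner y y); simpl. ring.
Qed.

Lemma nsq_opp {H : HilbertSpace} (x : H) : nsq (hopp x) = nsq x.
Proof. rewrite opp_scal, nsq_scal. unfold Cabs2; simpl. ring. Qed.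

Lemma nsq_sub_le {H : HilbertSpace} (x y : H) : nsq (hsub x y) <= 2 * nsq x + 2 * nsq y.
Proof.
  unfold hsub. rewrite nsq_add, nsq_opp. pose proof (nsq_add x y) as E2.
  pose proof (nsq_ge0 (hadd x y)). pose proof (nsq_ge0 x). pose proof (nsq_ge0 y).
  rewrite opp_scal, inner_scal_r. destruct (hinner x y); simpl in *. lra.
Qed.

Lemma nsq_add_real {H : HilbertSpace} (x y : H) (s : R) :
  nsq (hadd x (hscal (mkC s 0) y)) = nsq x + 2 * s * re (hinner x y) + s * s * nsq y.
Proof. rewrite nsq_add, nsq_scal, inner_scal_r. unfold Cabs2. destruct (hinner x y); simpl. ring. Qed.

Lemma cs_re {H : HilbertSpace} (x y : H) : re (hinner x y) ^ 2 <= nsq x * nsq y.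
Proof.
  pose proof (nsq_ge0 y) as Hy. destruct (Req_dec (nsq y) 0) as [E|E].
  - apply nsq_eq0 in E. subst y. rewrite inner_zero_r, nsq_zero. simpl. lra.
  - set (r := re (hinner x y)). pose proof (nsq_add_real x y (- r / nsq y)) as E1.
    pose proof (nsq_ge0 (hadd x (hscal (mkC (- r / nsq y) 0) y))) as P. rewrite E1 in P. fold r in P.
    assert (Hy' : 0 < nsq y) by lra.
    assert (P2 : 0 <= nsq x * nsq y - r * r).
    { replace (nsq x * nsq y - r * r) with
        ((nsq x + 2 * (- r / nsq y) * r + - r / nsq y * (- r / nsq y) * nsq y) * nsq y) by (field; lra).
      apply Rmult_le_pos; lra. }
    simpl. lra.
Qed.

Lemma norm_tri {H : HilbertSpace} (x y : H) :
  sqrt (nsq (hadd x y)) <= sqrt (nsq x) + sqrt (nsq y).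
Proof.
  pose proof (nsq_ge0 x). pose proof (nsq_ge0 y). pose proof (nsq_ge0 (hadd x y)).
  rewrite <- (sqrt_square (sqrt (nsq x) + sqrt (nsq y))).
  2:{ pose proof (sqrt_pos (nsq x)); pose proof (sqrt_pos (nsq y)); lra. }
  apply sqrt_le_1_alt. rewrite nsq_add.
  pose proof (cs_re x y) as C.
  assert (Hr : re (hinner x y) <= sqrt (nsq x) * sqrt (nsq y)).
  { rewrite <- sqrt_mult by auto. destruct (Rle_dec (re (hinner x y)) 0). 
    - pose proof (sqrt_pos (nsq x * nsq y)); lra.
    - rewrite <- (sqrt_square (re (hinner x y))) by lra. apply sqrt_le_1_alt. simpl in C. lra. }
  pose proof (sqrt_sqrt (nsq x) H0). pose proof (sqrt_sqrt (nsq y) H1). nra.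
Qed.

Definition lin {H : HilbertSpace} (f : H -> H) : Prop :=
  (forall x y, f (hadd x y) = hadd (f x) (f y)) /\ (forall a x, f (hscal a x) = hscal a (f x)).
Definition bnd {H : HilbertSpace} (f : H -> H) : Prop :=
  exists C, 0 <= C /\ forall x, nsq (f x) <= C * nsq x.

Lemma lin_zero {H : HilbertSpace} (f : H -> H) : lin f -> f hzero = hzero.
Proof. intros [_ Hs]. rewrite <- (scal0 hzero), Hs, !scal0. reflexivity. Qed.

Lemma lin_opp {H : HilbertSpace} (f : H -> H) : lin f -> forall x, f (hopp x) = hopp (f x).
Proof. intros [_ Hs] x. rewrite !opp_scal, Hs. reflexivity. Qed.

Lemma lin_sub {H : HilbertSpace} (f : H -> H) : lin f -> forall x y, f (hsub x y) = hsub (f x) (f y).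
Proof. intros L x y. unfold hsub. rewrite (proj1 L), lin_opp; auto. Qed.

Lemma add_sub_swap {H : HilbertSpace} (p q r s : H) :
  hsub (hadd p q) (hadd r s) = hadd (hsub p r) (hsub q s).
Proof.
  unfold hsub. rewrite opp_add, !hadd_assoc. f_equal.
  rewrite <- !hadd_assoc. f_equal. apply hadd_comm.
Qed.

Lemma lin_shift {H : HilbertSpace} (T : H -> H) a : lin T -> lin (shiftop T a).
Proof.
  intros [Ha Hs]. unfold shiftop. split.
  - intros x y. rewrite Ha, hscal_addv. apply add_sub_swap.
  - intros b x. rewrite Hs, scal_sub, scal_scal. reflexivity.
Qed.

Lemma lin_comp {H : HilbertSpace} (f g : H -> H) : lin f -> lin g -> lin (fun x => f (g x)).
Proof.
  intros [fa fs] [ga gs]. split; intros; rewrite ?ga, ?gs, ?fa, ?fs; reflexivity.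
Qed.

Lemma bnd_comp {H : HilbertSpace} (f g : H -> H) : bnd f -> bnd g -> bnd (fun x => f (g x)).
Proof.
  intros [C1' [C1p HC1]] [C2 [C2p HC2]]. exists (C1' * C2). split. nra.
  intro x. specialize (HC1 (g x)). specialize (HC2 x). nra.
Qed.

Lemma lin_id {H : HilbertSpace} : lin (fun x : H => x).
Proof. split; reflexivity. Qed.
Lemma bnd_id {H : HilbertSpace} : bnd (fun x : H => x).
Proof. exists 1. split. lra. intros; lra. Qed.

Lemma lin_ext {H : HilbertSpace} (f g : H -> H) : (forall x, f x = g x) -> lin f -> lin g.
Proof. intros E [a s]. split; intros; rewrite <- !E; auto. Qed.
Lemma bnd_ext {H : HilbertSpace} (f g : H -> H) : (forall x, f x = g x) -> bnd f -> bnd g.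
Proof. intros E [C [p HC]]. exists C. split; auto. intros; rewrite <- E; auto. Qed.

Lemma lin_iter {H : HilbertSpace} n (f : H -> H) : lin f -> lin (iter_op n f).
Proof.
  intro L. induction n. - apply lin_id.
  - apply (lin_ext (fun x => f (iter_op n f x))). reflexivity. apply lin_comp; auto.
Qed.
Lemma bnd_iter {H : HilbertSpace} n (f : H -> H) : bnd f -> bnd (iter_op n f).
Proof.
  intro L. induction n. - apply bnd_id.
  - apply (bnd_ext (fun x => f (iter_op n f x))). reflexivity. apply bnd_comp; auto.
Qed.

Lemma Cabs2_ge0 a : 0 <= Cabs2 a.
Proof. unfold Cabs2. nra. Qed.

Lemma bnd_shift {H : HilbertSpace} (T : H -> H) a : bnd T -> bnd (shiftop T a).
Proof.
  intros [C [Cp HC]]. exists (2 * C + 2 * Cabs2 a). split. pose proof (Cabs2_ge0 a); lra.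
  intro x. unfold shiftop. eapply Rle_trans. apply nsq_sub_le. rewrite nsq_scal.
  specialize (HC x). nra.
Qed.

Lemma lin_P {H : HilbertSpace} (T : H -> H) t k m : lin T -> lin (Pprod T t k m).
Proof.
  intro L. induction m. - apply lin_id.
  - apply (lin_ext (fun x => iter_op (k (S m)) (shiftop T (t (S m))) (Pprod T t k m x))). reflexivity.
    apply lin_comp; auto. apply lin_iter, lin_shift, L.
Qed.
Lemma bnd_P {H : HilbertSpace} (T : H -> H) t k m : bnd T -> bnd (Pprod T t k m).
Proof.
  intro L. induction m. - apply bnd_id.
  - apply (bnd_ext (fun x => iter_op (k (S m)) (shiftop T (t (S m))) (Pprod T t k m x))). reflexivity.
    apply bnd_comp; auto. apply bnd_iter, bnd_shift, L.
Qed.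

Definition comm {H : HilbertSpace} (f g : H -> H) := forall x, f (g x) = g (f x).

Lemma shift_comm {H : HilbertSpace} (T : H -> H) a b : lin T -> comm (shiftop T a) (shiftop T b).
Proof.
  intros L x. unfold shiftop. rewrite !(lin_sub T L), !(proj2 L), !scal_sub.
  rewrite sub_swap. f_equal. f_equal. apply scal_scal.
Qed.

Lemma iter_comm {H : HilbertSpace} n (f g : H -> H) : comm f g -> comm (iter_op n f) g.
Proof.
  intros C x. induction n; simpl. reflexivity. rewrite IHn. apply C.
Qed.

Lemma comm_sym {H : HilbertSpace} (f g : H -> H) : comm f g -> comm g f.
Proof. intros C x. symmetry. apply C. Qed.

Lemma A_comm {H : HilbertSpace} (T : H -> H) a b n n' : lin T ->
  comm (iter_op n (shiftop T a)) (iter_op n' (shiftop T b)).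
Proof.
  intro L. apply iter_comm. apply comm_sym. apply iter_comm. apply comm_sym. apply shift_comm, L.
Qed.

Lemma P_comm {H : HilbertSpace} (T : H -> H) t k m a n : lin T ->
  comm (Pprod T t k m) (iter_op n (shiftop T a)).
Proof.
  intros L x. induction m; simpl. reflexivity. rewrite IHm. apply A_comm, L.
Qed.

Lemma PQ {H : HilbertSpace} (T : H -> H) t k j : lin T ->
  forall m x, Pprod T t k m (Qprod T t k j m x) = Pprod T t k (m + j) x.
Proof.
  intro L. induction j; intros m x; simpl.
  - rewrite Nat.add_0_r. reflexivity.
  - rewrite P_comm by auto. replace (m + S j)%nat with (S m + j)%nat by lia.
    rewrite <- IHj. reflexivity.
Qed.


Definition subsp {H : HilbertSpace} (V : H -> Prop) : Prop :=
  V hzero /\ (forall x y, V x -> V y -> V (hadd x y)) /\ (forall a x, V x -> V (hscal a x)).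
Definition inv {H : HilbertSpace} (f : H -> H) (V : H -> Prop) : Prop := forall x, V x -> V (f x).

Lemma subsp_opp {H : HilbertSpace} (V : H -> Prop) : subsp V -> forall x, V x -> V (hopp x).
Proof. intros [_ [_ S]] x Vx. rewrite opp_scal. auto. Qed.
Lemma subsp_sub {H : HilbertSpace} (V : H -> Prop) : subsp V -> forall x y, V x -> V y -> V (hsub x y).
Proof. intros S x y Vx Vy. unfold hsub. apply (proj1 (proj2 S)); auto. apply subsp_opp; auto. Qed.

Lemma inv_shift {H : HilbertSpace} (T : H -> H) a V : subsp V -> inv T V -> inv (shiftop T a) V.
Proof. intros S I x Vx. unfold shiftop. apply subsp_sub; auto. apply S; auto. Qed.
Lemma inv_iter {H : HilbertSpace} n (f : H -> H) V : inv f V -> inv (iter_op n f) V.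
Proof. intros I x Vx. induction n; simpl; auto. Qed.
Lemma inv_Q {H : HilbertSpace} (T : H -> H) t k V : subsp V -> inv T V ->
  forall j m, inv (Qprod T t k j m) V.
Proof.
  intros S I j. induction j; intros m x Vx; simpl; auto.
  apply inv_iter. apply inv_shift; auto. apply IHj; auto.
Qed.
Lemma inv_P {H : HilbertSpace} (T : H -> H) t k V : subsp V -> inv T V ->
  forall m, inv (Pprod T t k m) V.
Proof.
  intros S I m. induction m; intros x Vx; simpl; auto.
  apply inv_iter. apply inv_shift; auto. apply IHm; auto.
Qed.

Lemma real_eps (a K : R) : 0 <= a -> (forall e, 0 < e -> 2 * e * a <= e * e * a * K) -> a = 0.
Proof.
  intros Ha Hf. destruct (Req_dec a 0) as [|Hn]; auto. exfalso.
  set (e := / (Rabs K + 1)). assert (He : 0 < e) by (unfold e; apply Rinv_0_lt_compat; pose proof (Rabs_pos K); lra).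
  specialize (Hf e He).
  assert (E1 : e * (Rabs K + 1) = 1) by (unfold e; field; pose proof (Rabs_pos K); lra).
  assert (E2 : K <= Rabs K) by apply RRle_abs.
  assert (0 < a) by lra.
  assert (2 <= e * K) by (apply (Rmult_le_reg_l (e * a)); nra).
  nra.
Qed.

Lemma lemA {H : HilbertSpace} (T : H -> H) (V : H -> Prop) (lam : Cpx) : lin T -> subsp V ->
  (forall v, V v -> nsq (T v) <= Cabs2 lam * nsq v) ->
  forall u x, V u -> V x -> T u = hscal lam u -> hinner (T x) u = Cmul lam (hinner x u).
Proof.
  intros L S B u x Vu Vx Tu.
  destruct (Req_dec (Cabs2 lam) 0) as [L0|L0].
  { assert (Tx0 : T x = hzero). { apply nsq_eq0. pose proof (B x Vx). pose proof (nsq_ge0 (T x)). nra. }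
    rewrite Tx0, inner_zero_l. unfold Cabs2 in L0. destruct lam as [lr li]; simpl in L0.
    assert (lr = 0) by nra. assert (li = 0) by nra. subst. destruct (hinner x u); ceq. }
  assert (key : forall c, nsq (T (hadd u (hscal c x))) <= Cabs2 lam * nsq (hadd u (hscal c x))).
  { intro c. apply B. apply S; auto. apply S; auto. }
  assert (key2 : forall c, Cabs2 lam * nsq u + 2 * re (Cmul (Cmul lam (Cconj c)) (hinner u (T x)))
       + Cabs2 c * nsq (T x) <= Cabs2 lam * (nsq u + 2 * re (Cmul (Cconj c) (hinner u x)) + Cabs2 c * nsq x)).
  { intro c. specialize (key c). rewrite (proj1 L), (proj2 L), Tu, nsq_add, nsq_add, !nsq_scal,
      inner_scal2, inner_scal_r in key.
    exact key. }
  rewrite (hinner_sym u (T x)), (hinner_sym u x).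
  destruct (hinner u x) as [zr zi] eqn:Ez. destruct (hinner u (T x)) as [yr yi] eqn:Ey.
  destruct lam as [lr li]. unfold Cabs2 in *; simpl in *.
  set (LL := lr * lr + li * li) in *.
  set (wr := lr * yr - li * yi - LL * zr). set (wi := lr * yi + li * yr - LL * zi).
  set (K := LL * nsq x - nsq (T x)).
  assert (W : wr * wr + wi * wi = 0).
  { apply (real_eps _ K). nra. intros e He. specialize (key2 (mkC (e * wr) (e * wi))). simpl in key2.
    unfold wr, wi, K in *. nra. }
  assert (wr = 0) by nra. assert (wi = 0) by nra.
  assert (LLp : 0 < LL) by (unfold LL in *; nra).
  assert (yr = lr * zr + li * zi).
  { assert (E1 : lr*yr - li*yi = LL*zr) by (unfold wr in *; lra).
    assert (E2 : li*yr + lr*yi = LL*zi) by (unfold wi in *; lra).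
    apply (Rmult_eq_reg_l LL); [|lra].
    replace (LL*yr) with (lr*(lr*yr - li*yi) + li*(li*yr+lr*yi)) by (unfold LL; ring).
    rewrite E1, E2; ring. }
  assert (yi = lr * zi - li * zr).
  { assert (E1 : lr*yr - li*yi = LL*zr) by (unfold wr in *; lra).
    assert (E2 : li*yr + lr*yi = LL*zi) by (unfold wi in *; lra).
    apply (Rmult_eq_reg_l LL); [|lra].
    replace (LL*yi) with (lr*(li*yr+lr*yi) - li*(lr*yr - li*yi)) by (unfold LL; ring).
    rewrite E1, E2; ring. }
  apply Ceq; simpl; nra.
Qed.


Lemma lemB {H : HilbertSpace} (T : H -> H) (V : H -> Prop) (lam : Cpx) : lin T -> subsp V -> inv T V ->
  (forall v, V v -> nsq (T v) <= Cabs2 lam * nsq v) ->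
  forall n x, V x -> iter_op (S n) (shiftop T lam) x = hzero -> shiftop T lam x = hzero.
Proof.
  intros L SS I B n. induction n; intros x Vx E. { exact E. }
  apply IHn; auto.
  set (v := iter_op n (shiftop T lam) x). set (u := shiftop T lam v).
  assert (Vv : V v) by (apply inv_iter; auto; apply inv_shift; auto).
  assert (Vu : V u) by (apply inv_shift; auto).
  assert (Tu : T u = hscal lam u).
  { apply sub_eq0. exact E. }
  pose proof (lemA T V lam L SS B u v Vu Vv Tu) as A.
  change (iter_op (Datatypes.S n) (shiftop T lam) x) with u. apply nsq_eq0. unfold nsq.
  assert (Eu : u = hsub (T v) (hscal lam v)) by reflexivity.
  rewrite Eu at 1. rewrite inner_sub_l, A, hinner_scal.
  destruct (Cmul lam (hinner v u)); simpl; ring.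
Qed.

Definition conv {H : HilbertSpace} (u : nat -> H) (l : H) : Prop :=
  forall eps, eps > 0 -> exists N, forall n, (n >= N)%nat -> sqrt (nsq (hadd (u n) (hopp l))) < eps.
Definition closedV {H : HilbertSpace} (V : H -> Prop) : Prop :=
  forall u l, (forall n, V (u n)) -> conv u l -> V l.

Lemma sqrt_lt_of (x e : R) : 0 <= x -> 0 < e -> x < e * e -> sqrt x < e.
Proof.
  intros. rewrite <- (sqrt_square e) by lra. apply sqrt_lt_1_alt. lra.
Qed.

Lemma sq_lt_of (x e : R) : 0 <= x -> sqrt x < e -> x < e * e.
Proof.
  intros Hx Hs. pose proof (sqrt_pos x). rewrite <- (sqrt_sqrt x Hx). nra.
Qed.

Lemma ker_closed {H : HilbertSpace} (f : H -> H) : lin f -> bnd f ->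
  closedV (fun x => f x = hzero).
Proof.
  intros L [C [Cp HC]] u l Hu Hc. apply nsq_eq0.
  pose proof (nsq_ge0 (f l)) as P.
  destruct (Req_dec (nsq (f l)) 0) as [|N0]; auto. exfalso.
  set (d := nsq (f l)).
  set (eps := sqrt (d / (C + 1))).
  assert (dp : 0 < d) by (unfold d; lra).
  assert (ep : eps > 0) by (unfold eps; apply sqrt_lt_R0; apply Rdiv_lt_0_compat; lra).
  destruct (Hc eps ep) as [N HN]. specialize (HN N (Nat.le_refl _)).
  apply sq_lt_of in HN; [|apply nsq_ge0].
  unfold eps in HN. rewrite sqrt_sqrt in HN by (unfold Rdiv; apply Rmult_le_pos; [lra|apply Rlt_le, Rinv_0_lt_compat; lra]).
  specialize (HC (hadd (u N) (hopp l))).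
  rewrite (proj1 L), (lin_opp f L), Hu, add0l, nsq_opp in HC. fold d in HC.
  assert (C * nsq (hadd (u N) (hopp l)) <= C * (d / (C + 1))) by (apply Rmult_le_compat_l; lra).
  assert (C * (d / (C+1)) < d).
  { apply (Rmult_lt_reg_r (C+1)); [lra|]. replace (C * (d / (C + 1)) * (C + 1)) with (C * d) by (field; lra). nra. }
  lra.
Qed.

Lemma sqrt_add_le (a b : R) : 0 <= a -> 0 <= b -> sqrt (a + b) <= sqrt a + sqrt b.
Proof.
  intros. rewrite <- (sqrt_square (sqrt a + sqrt b)).
  2:{ pose proof (sqrt_pos a); pose proof (sqrt_pos b); lra. }
  apply sqrt_le_1_alt. pose proof (sqrt_sqrt a H). pose proof (sqrt_sqrt b H0).
  pose proof (sqrt_pos a); pose proof (sqrt_pos b). nra.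
Qed.

Lemma parallelogram {H : HilbertSpace} (a b : H) :
  nsq (hadd a b) + nsq (hsub a b) = 2 * nsq a + 2 * nsq b.
Proof.
  unfold hsub. rewrite !nsq_add, nsq_opp, opp_scal, inner_scal_r.
  destruct (hinner a b); simpl. ring.
Qed.

Lemma inv_lt (n N : nat) : (n >= N)%nat -> / (INR n + 1) <= / (INR N + 1).
Proof.
  intro. apply Rinv_le_contravar. pose proof (pos_INR N); lra. apply le_INR in H. lra.
Qed.

Lemma small_inv (g : R) : 0 < g -> exists N : nat, / (INR N + 1) < g.
Proof.
  intro. destruct (archimed (/ g)) as [A _].
  exists (Z.to_nat (up (/ g))).
  assert (0 < / g) by (apply Rinv_0_lt_compat; auto).
  assert (IZR (up (/ g)) <= INR (Z.to_nat (up (/ g))) + 1).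
  { destruct (Z_le_gt_dec 0 (up (/ g))).
    - rewrite INR_IZR_INZ, Z2Nat.id by auto. lra.
    - pose proof (pos_INR (Z.to_nat (up (/g)))). assert (IZR (up (/g)) < 0) by (apply IZR_lt; lia). lra. }
  assert (X : / (INR (Z.to_nat (up (/ g))) + 1) < / / g).
  { apply Rinv_lt_contravar.
    - apply Rmult_lt_0_compat; auto. pose proof (pos_INR (Z.to_nat (up (/ g)))). lra.
    - lra. }
  rewrite Rinv_inv in X. exact X.
Qed.

Lemma proj_thm {H : HilbertSpace} (V : H -> Prop) : subsp V -> closedV V ->
  forall w, exists p, V p /\ forall v, V v -> hinner (hsub w p) v = C0.
Proof.
  intros S Cl w.
  set (E := fun r => exists v, V v /\ r = - nsq (hsub w v)).
  destruct (completeness E) as [m [Mub Mlub]].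
  { exists 0. intros r [v [_ ->]]. pose proof (nsq_ge0 (hsub w v)). lra. }
  { exists (- nsq (hsub w hzero)). exists hzero. split; auto. apply S. }
  set (d2 := - m).
  assert (Hlow : forall v, V v -> d2 <= nsq (hsub w v)).
  { intros v Vv. assert (E (- nsq (hsub w v))) by (exists v; auto). specialize (Mub _ H0). unfold d2. lra. }
  assert (Happ : forall e, 0 < e -> exists v, V v /\ nsq (hsub w v) < d2 + e).
  { intros e He. apply NNPP. intro NE.
    assert (m <= m - e).
    { apply Mlub. intros r [v [Vv ->]]. destruct (Rle_dec (- nsq (hsub w v)) (m - e)); auto.
      exfalso. apply NE. exists v. split; auto. unfold d2. lra. }
    lra. }
  assert (Hseq : forall n : nat, exists v, V v /\ nsq (hsub w v) < d2 + / (INR n + 1)).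
  { intro n. apply Happ. apply Rinv_0_lt_compat. pose proof (pos_INR n). lra. }
  set (vs := fun n => proj1_sig (constructive_indefinite_description _ (Hseq n))).
  assert (Hvs : forall n, V (vs n) /\ nsq (hsub w (vs n)) < d2 + / (INR n + 1)).
  { intro n. unfold vs. destruct (constructive_indefinite_description _ (Hseq n)). simpl. auto. }
  assert (d2p : 0 <= d2).
  { pose proof (Hlow hzero (proj1 S)). assert (E (- nsq (hsub w hzero))) by (exists hzero; split; auto; apply S).
    assert (m <= 0). { apply Mlub. intros r [v [_ ->]]. pose proof (nsq_ge0 (hsub w v)). lra. }
    unfold d2; lra. }
  assert (Hcau : forall n m', nsq (hsub (vs n) (vs m')) <= 2 * / (INR n + 1) + 2 * / (INR m' + 1)).
  { intros n m'. destruct (Hvs n) as [Vn Hn]. destruct (Hvs m') as [Vm Hm].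
    set (a := hsub w (vs n)). set (b := hsub w (vs m')).
    pose proof (parallelogram a b) as Pg.
    set (mid := hscal (mkC (1/2) 0) (hadd (vs n) (vs m'))).
    assert (Vmid : V mid) by (apply S; apply S; auto).
    assert (Eab : hadd a b = hscal (mkC 2 0) (hsub w mid)).
    { unfold a, b, mid. rewrite scal_sub, <- hscal_mul.
      replace (Cmul (mkC 2 0) (mkC (1 / 2) 0)) with C1 by (apply Ceq; simpl; field).
      rewrite hscal_one. replace (mkC 2 0) with (Cadd C1 C1) by (apply Ceq; simpl; ring).
      rewrite hscal_adds, hscal_one. symmetry. apply add_sub_swap. }
    assert (Esub : nsq (hsub a b) = nsq (hsub (vs n) (vs m'))).
    { unfold a, b. rewrite sub_swap, sub_self. unfold hsub at 1. rewrite add0l, nsq_opp. reflexivity. }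
    rewrite Eab, nsq_scal, Esub in Pg. pose proof (Hlow mid Vmid). unfold Cabs2 in Pg; simpl in Pg.
    unfold a, b in Pg. lra. }
  destruct (hcomplete H vs) as [p Hp].
  { intros eps Heps. destruct (small_inv (eps * eps / 4)) as [N HN]. nra.
    exists N. intros n m' Hn Hm. apply sqrt_lt_of; auto. apply nsq_ge0.
    pose proof (Hcau n m') as Hc. pose proof (inv_lt _ _ Hn). pose proof (inv_lt _ _ Hm).
    unfold hsub, nsq in Hc. lra. }
  assert (Vp : V p) by (apply (Cl vs p); [intro n; apply Hvs | exact Hp]).
  exists p. split; auto.
  assert (Hwp : nsq (hsub w p) <= d2).
  { apply Rnot_lt_le. intro Hlt.
    set (D := sqrt (nsq (hsub w p))). set (e0 := sqrt d2).
    assert (e0 < D) by (apply sqrt_lt_1_alt; lra).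
    set (g := (D - e0) / 2). assert (gp : 0 < g) by (unfold g; lra).
    destruct (Hp g gp) as [N1 HN1]. destruct (small_inv (g * g)) as [N2 HN2]. nra.
    set (n := (N1 + N2)%nat). specialize (HN1 n ltac:(unfold n; lia)).
    pose proof (inv_lt n N2 ltac:(unfold n; lia)).
    destruct (Hvs n) as [_ Hn].
    assert (Eq : hadd (hsub w (vs n)) (hsub (vs n) p) = hsub w p).
    { unfold hsub. rewrite <- hadd_assoc, (hadd_assoc (hopp (vs n))), (hadd_comm (hopp (vs n))),
        hadd_opp, add0l. reflexivity. }
    pose proof (norm_tri (hsub w (vs n)) (hsub (vs n) p)) as Tr. rewrite Eq in Tr. fold D in Tr.
    assert (sqrt (nsq (hsub w (vs n))) <= sqrt (d2 + / (INR n + 1))) by (apply sqrt_le_1_alt; lra).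
    assert (0 < / (INR n + 1)) by (apply Rinv_0_lt_compat; pose proof (pos_INR n); lra).
    pose proof (sqrt_add_le d2 (/ (INR n + 1)) d2p ltac:(lra)).
    assert (sqrt (/ (INR n + 1)) < g) by (apply sqrt_lt_of; lra).
    unfold hsub at 2 in Tr. assert (Ee0 : e0 = sqrt d2) by reflexivity.
    assert (ED : D = sqrt (nsq (hsub w p))) by reflexivity.
    unfold g in *. unfold nsq in *. lra. }
  intros v Vv.
  set (z := hinner (hsub w p) v).
  assert (key : forall c, nsq (hsub w p) <= nsq (hadd (hsub w p) (hscal (Copp c) v))).
  { intro c. assert (Eq : hadd (hsub w p) (hscal (Copp c) v) = hsub w (hadd p (hscal c v))).
    { unfold hsub. rewrite opp_add, hadd_assoc. f_equal. rewrite opp_scal, <- hscal_mul.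
      f_equal. destruct c; ceq. }
    rewrite Eq. pose proof (Hlow (hadd p (hscal c v))). assert (V (hadd p (hscal c v))) by (apply S; auto; apply S; auto).
    specialize (H0 H1). lra. }
  destruct z as [zr zi] eqn:Ez.
  assert (Z : zr * zr + zi * zi = 0).
  { apply (real_eps _ (nsq v)). nra. intros e He. specialize (key (mkC (e * zr) (e * zi))).
    rewrite nsq_add, nsq_scal, inner_scal_r in key. fold z in key. rewrite Ez in key.
    unfold Cabs2 in key; simpl in key. nra. }
  apply Ceq; simpl; nra.
Qed.


Lemma bo_lin {H : HilbertSpace} (T : H -> H) : bounded_operator T -> lin T.
Proof. intros [a [s _]]. split; auto. Qed.

Lemma bo_bnd {H : HilbertSpace} (T : H -> H) : bounded_operator T -> bnd T.
Proof.
  intros [_ [_ [c Hc]]]. exists (c * c). split. nra. intro x. specialize (Hc x).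
  unfold hnorm in Hc. pose proof (nsq_ge0 x). pose proof (nsq_ge0 (T x)).
  pose proof (sqrt_pos (nsq (T x))). pose proof (sqrt_sqrt _ H0). pose proof (sqrt_sqrt _ H1).
  unfold nsq in *. nra.
Qed.

Lemma R_subsp {H : HilbertSpace} (T : H -> H) t k j : lin T -> subsp (Rsp T t k j).
Proof.
  intro L. pose proof (lin_P T t k j L) as LP. unfold Rsp. split; [|split].
  - apply lin_zero; auto.
  - intros x y Ex Ey. rewrite (proj1 LP), Ex, Ey. apply hadd_zero.
  - intros a x Ex. rewrite (proj2 LP), Ex. apply scal_zero.
Qed.

Lemma M_subsp {H : HilbertSpace} (T : H -> H) t k j : subsp (Msp T t k j).
Proof.
  unfold Msp. split; [|split].
  - intros. apply inner_zero_l.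
  - intros x y Ex Ey i Hi z Hz. rewrite hinner_add, (Ex i Hi z Hz), (Ey i Hi z Hz). ceq.
  - intros a x Ex i Hi z Hz. rewrite hinner_scal, (Ex i Hi z Hz). destruct a; ceq.
Qed.

Lemma R_mono {H : HilbertSpace} (T : H -> H) t k : lin T ->
  forall i j x, (i <= j)%nat -> Rsp T t k i x -> Rsp T t k j x.
Proof.
  intros L i j x Hij Hx. induction Hij; auto. unfold Rsp in *. simpl. rewrite IHHij.
  apply lin_zero. apply lin_iter, lin_shift, L.
Qed.

Lemma M_mono {H : HilbertSpace} (T : H -> H) t k j x : Msp T t k (S j) x -> Msp T t k j x.
Proof. intros Hx i Hi. apply Hx. lia. Qed.

Lemma Sep {H : HilbertSpace} (T : H -> H) t k : lin T -> bnd T ->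
  forall j y w, Msp T t k j y -> Rsp T t k j w -> hinner y w = C0.
Proof.
  intros L B j. induction j; intros y w My Rw.
  - unfold Rsp in Rw. simpl in Rw. subst. apply inner_zero_r.
  - destruct (proj_thm (Rsp T t k j) (R_subsp T t k j L)
        (ker_closed _ (lin_P T t k j L) (bnd_P T t k j B)) w) as [p [Rp Orth]].
    assert (Ll : Lsp T t k (S j) (hsub w p)).
    { split.
      - apply subsp_sub. apply R_subsp; auto. auto. apply (R_mono T t k L j); auto.
      - intros y' Hy'. replace (S j - 1)%nat with j in Hy' by lia. auto. }
    rewrite <- (sub_add w p), inner_add_r.
    rewrite (IHj y p (M_mono T t k j y My) Rp).
    rewrite (My (S j) ltac:(lia) _ Ll). ceq.
Qed.

Lemma RM0 {H : HilbertSpace} (T : H -> H) t k : lin T -> bnd T ->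
  forall j y, Rsp T t k j y -> Msp T t k j y -> y = hzero.
Proof.
  intros L B j y R M. apply nsq_eq0. unfold nsq. rewrite (Sep T t k L B j y y M R). reflexivity.
Qed.

Definition Good {H : HilbertSpace} (T : H -> H) t k (j : nat) : Prop :=
  forall i, (1 <= i <= j)%nat -> forall v, Msp T t k (i - 1) v -> nsq (T v) <= Cabs2 (t i) * nsq v.

Lemma Inv {H : HilbertSpace} (T : H -> H) t k (N : nat) : lin T -> bnd T ->
  (forall i, (1 <= i <= N)%nat -> (1 <= k i)%nat) ->
  forall j, (j <= N)%nat -> Good T t k j ->
    (forall i, (1 <= i <= j)%nat -> forall x, Lsp T t k i x -> T x = hscal (t i) x) /\
    (forall x, Msp T t k j x -> Msp T t k j (T x)).
Proof.
  intros L B hk j. induction j; intros HjN G.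
  - split. intros; lia. intros x _ i Hi. lia.
  - destruct IHj as [I1 I2]. lia. { intros i Hi. apply G. lia. }
    assert (Bd : forall v, Msp T t k j v -> nsq (T v) <= Cabs2 (t (S j)) * nsq v).
    { intros v Hv. apply G. lia. replace (S j - 1)%nat with j by lia. auto. }
    assert (LM : forall x, Lsp T t k (S j) x -> Msp T t k j x).
    { intros x [Rx Ox] i Hi y Ly. apply Ox. replace (S j - 1)%nat with j by lia.
      apply (R_mono T t k L i j); [lia|]. apply Ly. }
    assert (I1' : forall x, Lsp T t k (S j) x -> T x = hscal (t (S j)) x).
    { intros x Lx. pose proof (LM x Lx) as Mx.
      set (y := iter_op (k (S j)) (shiftop T (t (S j))) x).
      assert (My : Msp T t k j y).
      { unfold y. apply (inv_iter (k (S j)) (shiftop T (t (S j))) (Msp T t k j)); [|exact Mx].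
        apply inv_shift; auto. apply M_subsp. }
      assert (Ry : Rsp T t k j y).
      { unfold Rsp, y. rewrite P_comm by auto. apply (proj1 Lx). }
      pose proof (RM0 T t k L B j y Ry My) as y0.
      apply sub_eq0. apply (lemB T (Msp T t k j) (t (S j)) L (M_subsp T t k j) I2 Bd (k (S j) - 1) x Mx).
      replace (S (k (S j) - 1)) with (k (S j)) by (pose proof (hk (S j)); lia). exact y0. }
    split.
    + intros i Hi x Lx. destruct (Nat.eq_dec i (S j)) as [->|Ne]. auto. apply I1; auto. lia.
    + intros x Mx i Hi y Ly. destruct (Nat.eq_dec i (S j)) as [->|Ne].
      * rewrite (lemA T (Msp T t k j) (t (S j)) L (M_subsp T t k j) Bd y x (LM y Ly) (M_mono T t k j x Mx) (I1' y Ly)).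
        rewrite (Mx (S j) ltac:(lia) y Ly). ceq.
      * apply (I2 x (M_mono T t k j x Mx) i); [lia | auto].
Qed.

Lemma exists_m {H : HilbertSpace} (T : H -> H) t k (N : nat) :
  exists m, (m <= N)%nat /\ Good T t k m /\ ((m < N)%nat -> ~ Good T t k (S m)).
Proof.
  assert (G0 : Good T t k 0) by (intros i Hi; lia).
  assert (forall d j, (j + d = N)%nat -> Good T t k j ->
     exists m, (m <= N)%nat /\ Good T t k m /\ ((m < N)%nat -> ~ Good T t k (S m))).
  { induction d; intros j Hj G.
    - exists j. split. lia. split. auto. intro; lia.
    - destruct (classic (Good T t k (S j))) as [G1|G1].
      + apply (IHd (S j)). lia. auto.
      + exists j. split. lia. split; auto. }
  apply (H0 N 0%nat). lia. auto.
Qed.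


Theorem mainTheorem7 (H : HilbertSpace) (T : H -> H) (N : nat)
  (t : nat -> Cpx) (k : nat -> nat)
  (hT : bounded_operator T)
  (hdist : forall i j, (1 <= i <= N)%nat -> (1 <= j <= N)%nat -> i <> j -> t i <> t j)
  (hord : forall i j, (1 <= i <= j)%nat -> (j <= N)%nat -> Cabs (t j) <= Cabs (t i))
  (hk : forall i, (1 <= i <= N)%nat -> (1 <= k i)%nat)
  (hpoly : forall x : H, Pprod T t k N x = hzero) :
  exists m : nat, (m <= N)%nat /\
    (forall i, (1 <= i <= m)%nat -> forall x, Lsp T t k i x -> T x = hscal (t i) x) /\
    (forall x, Msp T t k m x -> Msp T t k m (T x)) /\
    (forall x, Msp T t k m x -> Qprod T t k (N - m) m x = hzero) /\
    (forall i, (m + 1 <= i <= N)%nat ->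
       exists s, is_opnorm_on (Msp T t k m) T s /\ s > Cabs (t i)).
Proof.
  pose proof (bo_lin T hT) as L. pose proof (bo_bnd T hT) as B.
  destruct (exists_m T t k N) as [m [HmN [Gm NG]]].
  destruct (Inv T t k N L B hk m HmN Gm) as [I1 I2].
  exists m. split; auto. split; auto. split; auto. split.
  - intros x Mx. apply (RM0 T t k L B m).
    + unfold Rsp. rewrite PQ by auto. replace (m + (N - m))%nat with N by lia. apply hpoly.
    + apply (inv_Q T t k (Msp T t k m) (M_subsp T t k m) I2 (N - m) m x Mx).
  - intros i Hi.
    assert (Hlt : (m < N)%nat) by lia. specialize (NG Hlt).
    assert (Ex : exists v, Msp T t k m v /\ Cabs2 (t (S m)) * nsq v < nsq (T v)).
    { apply NNPP. intro NE. apply NG. intros i0 Hi0 v Mv.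
      destruct (Nat.eq_dec i0 (S m)) as [->|Ne].
      - replace (S m - 1)%nat with m in Mv by lia. apply Rnot_lt_le. intro Hc. apply NE. exists v. auto.
      - apply Gm; auto. lia. }
    destruct Ex as [v [Mv Hv]].
    destruct hT as [_ [_ [c Hc]]].
    set (E := fun r => exists x, Msp T t k m x /\ hnorm x <= 1 /\ r = hnorm (T x)).
    destruct (completeness E) as [s [Sub Slub]].
    { exists (Rabs c). intros r [x [_ [Hx ->]]]. specialize (Hc x).
      pose proof (sqrt_pos (nsq x)). unfold hnorm in *. pose proof (Rle_abs c). pose proof (Rabs_pos c).
      assert (c * sqrt (re (hinner x x)) <= Rabs c * sqrt (re (hinner x x))) by (apply Rmult_le_compat_r; auto).
      nra. }
    { exists (hnorm (T hzero)). exists hzero. split. apply M_subsp. split; auto.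
      unfold hnorm. rewrite inner_zero_l. simpl. rewrite sqrt_0. lra. }
    exists s. split. { split; auto. }
    assert (vpos : 0 < nsq v).
    { pose proof (nsq_ge0 v). destruct (Req_dec (nsq v) 0) as [E0|E0]; [|lra].
      apply nsq_eq0 in E0. subst v. rewrite (lin_zero T L), nsq_zero in Hv. lra. }
    set (al := / sqrt (nsq v)).
    assert (sp : 0 < sqrt (nsq v)) by (apply sqrt_lt_R0; auto).
    assert (al2 : al * al * nsq v = 1).
    { unfold al. rewrite <- (sqrt_sqrt (nsq v)) at 3 by lra. field. lra. }
    assert (alp : 0 < al) by (unfold al; apply Rinv_0_lt_compat; auto).
    set (xx := hscal (mkC al 0) v).
    assert (Exx : E (hnorm (T xx))).
    { exists xx. split. apply M_subsp. auto. split; auto. unfold hnorm. fold (nsq xx). unfold xx.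
      rewrite nsq_scal. unfold Cabs2; simpl. replace (al * al + 0 * 0) with (al * al) by ring.
      rewrite al2, sqrt_1. lra. }
    specialize (Sub _ Exx).
    assert (Ct : Cabs (t i) <= Cabs (t (S m))) by (apply hord; lia).
    assert (Cabs (t (S m)) < hnorm (T xx)).
    { unfold hnorm, Cabs. fold (nsq (T xx)). unfold xx. rewrite (proj2 L), nsq_scal.
      apply sqrt_lt_1_alt. split. destruct (t (S m)); simpl; nra.
      replace (Cabs2 (mkC al 0)) with (al * al) by (unfold Cabs2; simpl; ring). replace (re (t (S m)) ^ 2 + im (t (S m)) ^ 2) with (Cabs2 (t (S m))) by (unfold Cabs2; ring).
      replace (Cabs2 (t (S m))) with (Cabs2 (t (S m)) * (al * al * nsq v)) by (rewrite al2; ring).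
      nra. }
    lra.
Qed.
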